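(* Let $R$ be a unital commutative Hausdorff topological ring with dense group of units, $E,F\in\mathrm{TopSMod}_R$, $\mathcal U\subset\underline E$ an open subfunctor and $f:\mathcal U\Rightarrow\underline F$ a natural transformation of functors $\Lambda\to\mathrm{Top}$ such that each $f_\lambda$, $\lambda\in\Lambda$, is $\mathcal C^1$ over $R$. Then for every $\lambda\in\Lambda$, every $x\in\mathcal U(\lambda)$, every $p$ with $\theta_p\in\lambda$ and every $y\in\underline E(\lambda\theta_p)$, $$f_\lambda(x+y)=f_\lambda(x)+df_\lambda(x)y.$$ If $R$, $E$ and $F$ are locally $k_\omega$, it suffices to assume that $f_\infty$ is $\mathcal C^1$ over $R$, and the conclusion then holds for all $\lambda\in\Lambda^\infty$ (with $f_{\lambda^\infty}=f_\infty$).
   Context: $\lambda^n=R[\theta_1,\dots,\theta_n]$, $\lambda^\infty=R[\theta_i:i\in\mathbb N]$ Grassmann algebras on odd generators ($\lambda^n=\bigoplus_I R\theta_I$ product topology; $\lambda^\infty$ direct limit topology). $\Lambda$ (resp. $\Lambda^\infty$): category of the $\lambda^n$, $n<\infty$ (resp. also $\lambda^\infty$), morphisms even unital $R$-algebra morphisms; $\varepsilon:\lambda\to R$ kills all $\theta_i$. For a Hausdorff graded topological $R$-module $E=E_0\oplus E_1$ ($E\in\mathrm{TopSMod}_R$): $E\otimes\lambda^N=\prod_{|I|\le N}E\theta_I$ (product topology), $E\otimes\lambda^\infty=\varinjlim E\otimes\lambda^N$ in Top, $\underline E(\lambda)=(E\otimes\lambda)_0$ with functoriality $\mathrm{id}\otimes\varphi$,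 and $\underline E(\lambda\theta_p)=(E\otimes\lambda\theta_p)_0\subset\underline E(\lambda)$. $\underline E(\lambda)$ is a topological $R$-module for $\lambda\in\Lambda$, and also for $\lambda^\infty$ when $R,E$ are locally $k_\omega$ (Hausdorff with every point having an open neighbourhood that is the topological direct limit of an increasing sequence of compact subsets). An open subfunctor $\mathcal U\subset\underline E$ has all $\mathcal U(\lambda)$ open and satisfies $\mathcal U(\lambda)=\underline E(\varepsilon)^{-1}(\mathcal U(R))$; this formula defines $\mathcal U(\lambda^\infty)$, and $f_\infty:\mathcal U(\lambda^\infty)\to\underline F(\lambda^\infty)$ is defined by $f_\infty|_{\mathcal U(\lambda^n)}=f_{\lambda^n}$. $\mathcal C^1$ over $R$ (Bertram–Glöckner–Neeb): a continuous $g:V\to Y$ ($V$ open in a Hausdorff topological $R$-module) is $\mathcal C^1$ if there is a continuous $g^{[1]}$ on $\{(x,v,t):x,x+tv\in V,t\in R\}$ with $g(x+tv)-g(x)=t\,g^{[1]}(x,v,t)$; then $dg(x)v=g^{[1]}(x,v,0)$. *)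

(* Defs.v *)
From HB Require Import structures.
From mathcomp Require Import all_boot all_order all_algebra.
From mathcomp Require Import boolp classical_sets functions topology.
From mathcomp Require Import finmap.

Set Implicit Arguments.
Unset Strict Implicit.
Unset Printing Implicit Defensive.
Import GRing.Theory.
Local Open Scope classical_set_scope.
Local Open Scope ring_scope.

HB.structure Definition PTopZmod := {M of Topological M & GRing.Zmodule M}.

HB.mixin Record TopRing_cont R & Topological R & GRing.ComPzRing R := {
  topring_add_cont : continuous (fun p : R * R => p.1 + p.2);
  topring_opp_cont : continuous (fun x : R => - x);
  topring_mul_cont : continuous (fun p : R * R => p.1 * p.2) }.

HB.structure Definition TopComRing :=
  {R of PTopZmod R & GRing.ComPzRing R & TopRing_cont R}.

HB.mixin Record TopLmod_cont (R : TopComRing.type) M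
    & Topological M & GRing.Lmodule R M := {
  toplmod_add_cont : continuous (fun p : M * M => p.1 + p.2);
  toplmod_scale_cont : continuous (fun p : R * M => p.1 *: p.2) }.

HB.structure Definition TopLmod (R : TopComRing.type) :=
  {M of PTopZmod M & GRing.Lmodule R M & TopLmod_cont R M}.

Definition units_dense (R : TopComRing.type) : Prop :=
  closure [set u : R | exists v : R, u * v = 1] = setT.

Definition open_in {X : topologicalType} (S A : set X) : Prop :=
  exists O : set X, open O /\ A = O `&` S.

Definition locally_komega (X : topologicalType) : Prop :=
  hausdorff_space X /\
  forall x : X, exists W : set X, [/\ open W, W x &
    exists K : nat -> set X,
      [/\ (forall n, compact (K n)),
          (forall n, K n `<=` K n.+1),
          W = \bigcup_n K n &
          (forall A : set X, A `<=` W ->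
             (forall n, open_in (K n) (A `&` K n)) -> open_in W A)]].

(* C^1 maps over R (Bertram-Gloeckner-Neeb), on a subset V of a submodule S *)
(* of an ambient space X, with explicit module operations.                  *)

Section C1.
Variables (R : TopComRing.type) (X Y : topologicalType).
Variables (addX : X -> X -> X) (sclX : R -> X -> X).
Variables (subY : Y -> Y -> Y) (sclY : R -> Y -> Y).

Definition C1_dom (S V : set X) : set (X * X * R) :=
  [set z | V z.1.1 /\ S z.1.2 /\ V (addX z.1.1 (sclX z.2 z.1.2))].

Definition C1_witness (S V : set X) (g : X -> Y) (g1 : X * X * R -> Y) : Prop :=
  {within C1_dom S V, continuous g1} /\
  forall z, C1_dom S V z ->
    subY (g (addX z.1.1 (sclX z.2 z.1.2))) (g z.1.1) = sclY z.2 (g1 z).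

Definition C1 (S V : set X) (g : X -> Y) : Prop :=
  {within V, continuous g} /\ exists g1, C1_witness S V g g1.
End C1.

(* Grassmann algebras lambda^n = R[theta_0..theta_{n-1}], elements are       *)
(* coefficient families {set 'I_n} -> R (theta_I, I increasing).            *)

Section Grassmann.
Variable R : TopComRing.type.

Definition glam (n : nat) := {set 'I_n} -> R.

Definition gadd n (a b : glam n) : glam n := fun I => a I + b I.
Definition gscale n (t : R) (a : glam n) : glam n := fun I => t * a I.
Definition gone n : glam n := fun I => if I == finset.set0 then 1 else 0.
Definition gbasis n (I : {set 'I_n}) : glam n := fun J => if J == I then 1 else 0.

(* theta_I theta_J = gsign I J theta_{I u J} when I, J disjoint *)
Definition gsign n (I J : {set 'I_n}) : R :=
  (-1) ^+ #|finset (fun p : 'I_n * 'I_n =>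
                    [&& p.1 \in I, p.2 \in J & (val p.2 < val p.1)%N])|.

Definition gmul n (a b : glam n) : glam n := fun K =>
  \sum_(I : {set 'I_n}) \sum_(J : {set 'I_n})
     (if (I :&: J == finset.set0) && (I :|: J == K) then gsign I J * a I * b J else 0).

Definition geven n (a : glam n) : Prop := forall I : {set 'I_n}, odd #|I| -> a I = 0.
Definition godd n (a : glam n) : Prop := forall I : {set 'I_n}, ~~ odd #|I| -> a I = 0.

(* morphisms of the category Lambda: even unital R-algebra morphisms *)
Definition even_morph m n (phi : glam m -> glam n) : Prop :=
  [/\ (forall a b, phi (gadd a b) = gadd (phi a) (phi b)),
      (forall t a, phi (gscale t a) = gscale t (phi a)),
      phi (@gone m) = @gone n,
      (forall a b, phi (gmul a b) = gmul (phi a) (phi b)) &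
      (forall a, geven a -> geven (phi a)) /\ (forall a, godd a -> godd (phi a))].

Definition geps n : glam n -> glam 0 := fun a _ => a finset.set0.
End Grassmann.

(* The functor E-underline for E = E0 (+) E1.                               *)
(* E (x) lambda^n = prod_{I} E theta_I (product topology); its even part    *)
(* is the subset SEv n of the ambient space SE n.                           *)

Section Functor.
Variables (R : TopComRing.type) (E0 E1 : TopLmod.type R).

Definition SE (n : nat) := {ptws {set 'I_n} -> (E0 * E1)%type}.

Definition SEadd n (x y : SE n) : SE n := fun I => x I + y I.
Definition SEsub n (x y : SE n) : SE n := fun I => x I - y I.
Definition SEscale n (t : R) (x : SE n) : SE n := fun I => t *: x I.

Definition SEv n : set (SE n) :=
  [set x | forall I : {set 'I_n}, if odd #|I| then (x I).1 = 0 else (x I).2 = 0].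

Definition SEv_theta n (p : 'I_n) : set (SE n) :=
  [set y | SEv y /\ forall I : {set 'I_n}, p \notin I -> y I = 0].

Definition Emap m n (phi : glam R m -> glam R n) (x : SE m) : SE n :=
  fun J => \sum_(I : {set 'I_m}) phi (gbasis R I) J *: x I.

Definition open_subfunctor (U : forall n, set (SE n)) : Prop :=
  [/\ (forall n, U n `<=` @SEv n),
      (forall n, open_in (@SEv n) (U n)),
      (forall m n (phi : glam R m -> glam R n), even_morph phi ->
          forall x, U m x -> U n (Emap phi x)) &
      (forall n, U n = [set x | SEv x /\ U 0 (Emap (@geps R n) x)])].

Definition SEinf_carrier := {fset nat} -> (E0 * E1)%type.

Definition inj_fin N (x : SE N) : SEinf_carrier := fun J =>
  if all (fun j => (j < N)%N) J then x (finset (fun i : 'I_N => val i \in J)) else 0.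

Definition dlim_open (A : set SEinf_carrier) : Prop :=
  forall N, open (@inj_fin N @^-1` A).

Lemma dlim_openT : dlim_open setT.
Proof. by move=> N; rewrite preimage_setT; exact: openT. Qed.

Lemma dlim_openI : setI_closed dlim_open.
Proof. by move=> A B oA oB N; rewrite preimage_setI; apply: openI. Qed.

Lemma dlim_open_bigU (I : Type) (f : I -> set SEinf_carrier) :
  (forall i, dlim_open (f i)) -> dlim_open (\bigcup_i f i).
Proof.
by move=> ofi N; rewrite preimage_bigcup; apply: bigcup_open => i _; exact: ofi.
Qed.

(* E (x) lambda^infinity with the direct limit topology *)
Definition SEinf : Type := SEinf_carrier.
HB.instance Definition _ := Choice.on SEinf.
HB.instance Definition _ :=
  isOpenTopological.Build SEinf dlim_openT dlim_openI dlim_open_bigU.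

Definition SEinf_add (x y : SEinf) : SEinf := fun I => x I + y I.
Definition SEinf_sub (x y : SEinf) : SEinf := fun I => x I - y I.
Definition SEinf_scale (t : R) (x : SEinf) : SEinf := fun I => t *: x I.

Definition supported_below N (x : SEinf) : Prop :=
  forall J, x J <> 0 -> all (fun j => (j < N)%N) J.

Definition proj_fin N (x : SEinf) : SE N := fun I => x [fset val i | i in I]%fset.

Definition SEinf_v : set SEinf :=
  [set x | (exists N, supported_below N x) /\
           forall J, if odd #|` J| then (x J).1 = 0 else (x J).2 = 0].

Definition SEinf_theta (p : nat) : set SEinf :=
  [set y | SEinf_v y /\ forall J, p \notin J -> y J = 0].

Definition eps_inf (x : SEinf) : SE 0 := fun _ => x fset0.

Definition U_inf (U : forall n, set (SE n)) : set SEinf :=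
  [set x | SEinf_v x /\ U 0 (eps_inf x)].

Definition bound_of (x : SEinf) : nat := xget 0%N [set N | supported_below N x].
End Functor.

Arguments SEv {R E0 E1 n}.
Arguments SEinf_v {R E0 E1}.

Definition nat_trans (R : TopComRing.type) (E0 E1 F0 F1 : TopLmod.type R)
    (U : forall n, set (SE E0 E1 n)) (f : forall n, SE E0 E1 n -> SE F0 F1 n) :=
  [/\ (forall n x, U n x -> SEv (f n x)),
      (forall n, {within U n, continuous (f n)}) &
      (forall m n (phi : glam R m -> glam R n), even_morph phi ->
         forall x, U m x -> f n (@Emap R E0 E1 m n phi x) = @Emap R F0 F1 m n phi (f m x))].

(* f_infinity, defined by f_infinity|_{U(lambda^N)} = f_{lambda^N} *)
Definition f_inf (R : TopComRing.type) (E0 E1 F0 F1 : TopLmod.type R)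
    (f : forall n, SE E0 E1 n -> SE F0 F1 n) (x : SEinf E0 E1) : SEinf F0 F1 :=
  let N := bound_of x in inj_fin (f N (@proj_fin R E0 E1 N x)).

(* Main.v *)
Require Import Defs.
From HB Require Import structures.
From mathcomp Require Import all_boot all_order all_algebra.
From mathcomp Require Import boolp classical_sets functions topology.
From mathcomp Require Import finmap.
From mathcomp Require Import mathcomp_extra.
Set Implicit Arguments.
Unset Strict Implicit.
Unset Printing Implicit Defensive.
Import GRing.Theory.
Local Open Scope classical_set_scope.
Local Open Scope ring_scope.

Section Diag.
Variable R : TopComRing.type.

Definition dmorph n (w : {set 'I_n} -> R) (a : glam R n) : glam R n :=
  fun I => w I * a I.

Lemma dmorph_even n (w : {set 'I_n} -> R) :
  w finset.set0 = 1 ->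
  (forall I J, I :&: J = finset.set0 -> w (I :|: J) = w I * w J) ->
  even_morph (dmorph w).
Proof.
move=> w0 wU; split.
- by move=> a b; apply: funext => I; rewrite /dmorph /gadd mulrDr.
- by move=> t a; apply: funext => I; rewrite /dmorph /gscale mulrCA.
- apply: funext => I; rewrite /dmorph /gone; case: eqP => [->|_].
    by rewrite w0 mulr1.
  by rewrite mulr0.
- move=> a b; apply: funext => K; rewrite /dmorph /gmul mulr_sumr.
  apply: eq_bigr => I _; rewrite mulr_sumr; apply: eq_bigr => J _.
  case: ifP => [/andP[/eqP dIJ /eqP <-]|_]; last by rewrite mulr0.
  by rewrite wU // mulrACA -!mulrA mulrCA !mulrA.
- split=> a ha I hI; by rewrite /dmorph ha // mulr0.
Qed.
End Diag.

Section Emap.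
Variables (R : TopComRing.type) (E0 E1 : TopLmod.type R).

Lemma Emap_dmorph n (w : {set 'I_n} -> R) (x : SE E0 E1 n) J :
  Emap (dmorph w) x J = w J *: x J.
Proof.
rewrite /Emap (bigD1 J) //= big1 ?addr0.
  by rewrite /dmorph /gbasis eqxx mulr1.
by move=> I /negbTE hI; rewrite /dmorph /gbasis eq_sym hI mulr0 scale0r.
Qed.

Lemma Emap_geps n (x : SE E0 E1 n) J : Emap (@geps R n) x J = x finset.set0.
Proof.
rewrite /Emap (bigD1 finset.set0) //= big1 ?addr0.
  by rewrite /geps /gbasis eqxx scale1r.
by move=> I /negbTE hI; rewrite /geps /gbasis eq_sym hI scale0r.
Qed.
End Emap.

Definition nset n (I : {set 'I_n}) : {fset nat} := [fset val i | i in I]%fset.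

Lemma card_nset n (I : {set 'I_n}) : #|` nset I| = #|I|.
Proof.
rewrite /nset card_imfset /=; last exact: val_inj.
by rewrite cardE.
Qed.

Lemma nsetP n (I : {set 'I_n}) j : reflect (exists2 i, i \in I & j = val i) (j \in nset I).
Proof. exact: imfsetP. Qed.

Lemma mem_nset n (I : {set 'I_n}) (i : 'I_n) : (val i \in nset I) = (i \in I).
Proof.
apply/nsetP/idP => [[i' hi' /val_inj ->]|hi] //; by exists i.
Qed.

Lemma nset_inj n : injective (@nset n).
Proof.
move=> I J h; apply/finset.setP => i; by rewrite -!mem_nset h.
Qed.

Lemma nsetU n (I J : {set 'I_n}) : nset (I :|: J) = (nset I `|` nset J)%fset.
Proof.
apply/fsetP => j; rewrite in_fsetU; apply/nsetP/orP.
  by case=> i; rewrite finset.in_setU => /orP[] hi ->; [left|right]; rewrite mem_nset.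
by case=> /nsetP[i hi ->]; exists i => //; rewrite finset.in_setU hi ?orbT.
Qed.

Lemma nsetI n (I J : {set 'I_n}) : nset (I :&: J) = (nset I `&` nset J)%fset.
Proof.
apply/fsetP => j; rewrite in_fsetI; apply/nsetP/andP.
  by case=> i; rewrite finset.in_setI => /andP[] hi hj ->; rewrite !mem_nset.
case=> /nsetP[i hi ->] hj; exists i => //; by rewrite finset.in_setI hi -mem_nset hj.
Qed.

Lemma nset0 n : nset (finset.set0 : {set 'I_n}) = fset0.
Proof. apply/fsetP => j; rewrite in_fset0; apply/negbTE/nsetP => -[i]; by rewrite finset.in_set0. Qed.

Lemma nset_lt n (I : {set 'I_n}) j : j \in nset I -> (j < n)%N.
Proof. move/nsetP => -[i _ ->]; exact: ltn_ord. Qed.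

Lemma nset_finset n (J : {fset nat}) : all (fun j => (j < n)%N) J ->
  nset (finset (fun i : 'I_n => val i \in J)) = J.
Proof.
move=> /allP hJ; apply/fsetP => j; apply/nsetP/idP.
  by case=> i; rewrite inE => hi ->.
move=> hj; exists (Ordinal (hJ _ hj)) => //; by rewrite inE.
Qed.

Lemma all_nset n (I : {set 'I_n}) M : all (fun j => (j < M)%N) (nset I) = [forall i in I, (val i < M)%N].
Proof.
apply/allP/forall_inP => [h i hi|h j /nsetP[i hi ->]]; last exact: h.
by apply: h; rewrite mem_nset.
Qed.
Definition PF n (I1 I2 : {set 'I_n}) : {fset nat * nat} :=
  [fset (val p.1, val p.2) | p in finset (fun p : 'I_n * 'I_n => [&& p.1 \in I1, p.2 \in I2 & (val p.2 < val p.1)%N])]%fset.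

Lemma card_PF n (I1 I2 : {set 'I_n}) :
  #|` PF I1 I2| = #|finset (fun p : 'I_n * 'I_n => [&& p.1 \in I1, p.2 \in I2 & (val p.2 < val p.1)%N])|.
Proof.
rewrite /PF card_imfset /=; first by rewrite cardE.
by move=> [a b] [c d] [/val_inj -> /val_inj ->].
Qed.

Lemma mem_PF n (I1 I2 : {set 'I_n}) q :
  (q \in PF I1 I2) = [&& q.1 \in nset I1, q.2 \in nset I2 & (q.2 < q.1)%N].
Proof.
apply/imfsetP/and3P => /=.
  case=> -[a b]; rewrite inE => /and3P[ha hb hab] -> /=.
  by rewrite !mem_nset.
case: q => a b /= [/nsetP[i1 h1 ->] /nsetP[i2 h2 ->] h12].
by exists (i1, i2) => //; rewrite inE /= h1 h2 h12.
Qed.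

Lemma gsign_nset (R : TopComRing.type) n M (I1 I2 : {set 'I_n}) (J1 J2 : {set 'I_M}) :
  nset I1 = nset J1 -> nset I2 = nset J2 -> gsign R I1 I2 = gsign R J1 J2.
Proof.
move=> h1 h2; rewrite /gsign -!card_PF; congr (_ ^+ _); congr (#|` _|).
by apply/fsetP => q; rewrite !mem_PF h1 h2.
Qed.

Lemma eq_nset n (A B : {set 'I_n}) : (A == B) = (nset A == nset B).
Proof. by rewrite (inj_eq (@nset_inj n)). Qed.

Definition low n M (J : {set 'I_M}) : {set 'I_n} := finset (fun i : 'I_n => val i \in nset J).
Definition okn n (X : {fset nat}) := all (fun j => (j < n)%N) X.

Lemma sum_nset n (V : nmodType) (X : {fset nat}) (F : {set 'I_n} -> V) :
  \sum_(I : {set 'I_n}) (if nset I == X then F I else 0) =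
  if okn n X then F (finset (fun i : 'I_n => val i \in X)) else 0.
Proof.
case: ifP => hX.
  rewrite (bigD1 (finset (fun i : 'I_n => val i \in X))) //= nset_finset // eqxx.
  rewrite big1 ?addr0 // => I hI; case: eqP => // hIX; move: hI.
  by rewrite eq_nset nset_finset // hIX eqxx.
rewrite big1 // => I; case: eqP => // hIX; move: hX; rewrite -hIX.
by move=> /negP; case; apply/allP => j /nset_lt.
Qed.

Section Tau.
Variable R : TopComRing.type.

Definition tau n M (a : glam R n) : glam R M := fun J =>
  if okn n (nset J) then a (low n J) else 0.

Lemma tau_sum n M (a : glam R n) (J : {set 'I_M}) :
  tau a J = \sum_(I : {set 'I_n}) (if nset I == nset J then a I else 0).
Proof. by rewrite sum_nset. Qed.

Lemma nset_low n M (J : {set 'I_M}) : okn n (nset J) -> nset (low n J) = nset J.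
Proof. exact: nset_finset. Qed.


Lemma sum_if (V : nmodType) (T : finType) (b : bool) (F : T -> V) :
  (if b then \sum_i F i else 0) = \sum_i (if b then F i else 0).
Proof. by case: b => //; rewrite big1. Qed.

Lemma okn0 n : okn n fset0.
Proof. by apply/allP => j; rewrite in_fset0. Qed.

Lemma tau_coef n M (I1 I2 : {set 'I_n}) (K : {set 'I_M}) (x y : R) :
  (if okn M (nset I1) then (if okn M (nset I2) then
     (if (low M I1 :&: low M I2 == finset.set0) && (low M I1 :|: low M I2 == K)
      then gsign R (low M I1) (low M I2) else 0) * (x * y) else 0) else 0)
  = (if okn n (nset K) then
      (if (I1 :&: I2 == finset.set0) && (I1 :|: I2 == low n K)
       then gsign R I1 I2 * x * y else 0) else 0).
Proof.
case e: (nset I1 `|` nset I2 == nset K)%fset.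
- have okI1 : okn M (nset I1).
    by apply/allP => j hj; apply: (nset_lt (I:=K)); rewrite -(eqP e) in_fsetU hj.
  have okI2 : okn M (nset I2).
    by apply/allP => j hj; apply: (nset_lt (I:=K)); rewrite -(eqP e) in_fsetU hj orbT.
  have okK : okn n (nset K).
    by apply/allP => j; rewrite -(eqP e) in_fsetU => /orP[] /nset_lt.
  rewrite okI1 okI2 okK /=.
  have nU1 := nset_low okI1; have nU2 := nset_low okI2.
  rewrite [low M I1 :|: _ == K]eq_nset nsetU nU1 nU2 e.
  rewrite [I1 :|: I2 == _]eq_nset nsetU nset_low // e !andbT.
  rewrite [low M I1 :&: _ == _]eq_nset [I1 :&: I2 == _]eq_nset !nsetI nU1 nU2 !nset0.
  case: (nset I1 `&` nset I2 == fset0)%fset; last by rewrite mul0r.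
  by rewrite -(gsign_nset R (esym nU1) (esym nU2)) mulrA.
- have -> : (if okn n (nset K) then
      (if (I1 :&: I2 == finset.set0) && (I1 :|: I2 == low n K)
       then gsign R I1 I2 * x * y else 0) else 0) = 0.
    case: ifP => // okK; rewrite [I1 :|: I2 == _]eq_nset nsetU nset_low // e andbF //.
  case: ifP => // ok1; case: ifP => // ok2.
  by rewrite [low M I1 :|: _ == K]eq_nset nsetU !nset_low // e andbF mul0r.
Qed.

Lemma tau_even n M : even_morph (@tau n M).
Proof.
split.
- by move=> a b; apply: funext => J; rewrite /tau /gadd; case: ifP; rewrite ?addr0.
- by move=> t a; apply: funext => J; rewrite /tau /gscale; case: ifP; rewrite ?mulr0.
- apply: funext => J; rewrite /tau /gone; case: ifP => hok.
    by rewrite eq_nset nset_low // [J == _]eq_nset !nset0.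
  case: eqP => // hJ; move: hok; by rewrite hJ nset0 okn0.
- move=> a b; apply: funext => K.
  rewrite tau_sum /gmul.
  transitivity (\sum_(I1 : {set 'I_n}) \sum_(I2 : {set 'I_n})
     (if okn n (nset K) then
      (if (I1 :&: I2 == finset.set0) && (I1 :|: I2 == low n K)
       then gsign R I1 I2 * a I1 * b I2 else 0) else 0)).
    rewrite (eq_bigr (fun I => \sum_(I1 : {set 'I_n}) \sum_(I2 : {set 'I_n})
       (if nset I == nset K then
          (if (I1 :&: I2 == finset.set0) && (I1 :|: I2 == I)
           then gsign R I1 I2 * a I1 * b I2 else 0) else 0))); last first.
      by move=> I _; rewrite sum_if; apply: eq_bigr => I1 _; rewrite sum_if.
    rewrite exchange_big; apply: eq_bigr => I1 _.
    rewrite exchange_big; apply: eq_bigr => I2 _.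
    by rewrite sum_nset.
  symmetry.
  rewrite (eq_bigr (fun J1 => \sum_(J2 : {set 'I_M}) \sum_(I1 : {set 'I_n}) \sum_(I2 : {set 'I_n})
     (if nset J1 == nset I1 then (if nset J2 == nset I2 then
        (if (J1 :&: J2 == finset.set0) && (J1 :|: J2 == K) then gsign R J1 J2 else 0)
          * (a I1 * b I2) else 0) else 0))); last first.
    move=> J1 _; apply: eq_bigr => J2 _; rewrite !tau_sum.
    case: ifP => _.
      rewrite -mulrA big_distrl mulr_sumr; apply: eq_bigr => I1 _.
      rewrite big_distrr mulr_sumr; apply: eq_bigr => I2 _.
      by rewrite [nset J1 == _]eq_sym [nset J2 == _]eq_sym; case: (nset I1 == nset J1); case: (nset I2 == nset J2) => /=; rewrite ?mul0r ?mulr0.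
    by rewrite big1 // => I1 _; rewrite big1 // => I2 _; case: (nset J1 == nset I1); case: (nset J2 == nset I2); rewrite ?mul0r.
  rewrite (eq_bigr (fun J1 => \sum_(I1 : {set 'I_n}) \sum_(J2 : {set 'I_M}) \sum_(I2 : {set 'I_n})
     (if nset J1 == nset I1 then (if nset J2 == nset I2 then
        (if (J1 :&: J2 == finset.set0) && (J1 :|: J2 == K) then gsign R J1 J2 else 0)
          * (a I1 * b I2) else 0) else 0))); last by move=> J1 _; rewrite exchange_big.
  rewrite exchange_big; apply: eq_bigr => I1 _.
  rewrite (eq_bigr (fun J1 => \sum_(I2 : {set 'I_n}) \sum_(J2 : {set 'I_M})
     (if nset J1 == nset I1 then (if nset J2 == nset I2 then
        (if (J1 :&: J2 == finset.set0) && (J1 :|: J2 == K) then gsign R J1 J2 else 0)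
          * (a I1 * b I2) else 0) else 0))); last by move=> J1 _; rewrite exchange_big.
  rewrite exchange_big; apply: eq_bigr => I2 _.
  rewrite (eq_bigr (fun J1 => if nset J1 == nset I1 then \sum_(J2 : {set 'I_M})
     (if nset J2 == nset I2 then
        (if (J1 :&: J2 == finset.set0) && (J1 :|: J2 == K) then gsign R J1 J2 else 0)
          * (a I1 * b I2) else 0) else 0)); last by move=> J1 _; rewrite sum_if.
  rewrite sum_nset; cbv beta. have -> : forall (J1 : {set (ordinal M)}), \sum_(J2 : {set (ordinal M)}) (if nset J2 == nset I2 then (if (J1 :&: J2 == finset.set0) && (J1 :|: J2 == K) then gsign R J1 J2 else 0) * (a I1 * b I2) else 0) = (if okn M (nset I2) then (if (J1 :&: low M I2 == finset.set0) && (J1 :|: low M I2 == K) then gsign R J1 (low M I2) else 0) * (a I1 * b I2) else 0) by move=> J1; exact: sum_nset.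
  exact: tau_coef.
- split=> a ha J hJ; rewrite /tau; case: ifP => // hok; apply: ha;
  by rewrite -card_nset nset_low // card_nset.
Qed.

End Tau.


Lemma units_limit (R : TopComRing.type) (Y : topologicalType) (h : R -> Y) (c : Y) :
  hausdorff_space Y -> units_dense R -> {for 0, continuous h} ->
  (forall u v : R, u * v = 1 -> h u = c) -> h 0 = c.
Proof.
move=> hY hR hc hu; apply: hY => A B nA nB.
have n0 : nbhs (0 : R) (h @^-1` A) := hc _ nA.
have : closure [set u : R | exists v : R, u * v = 1] 0 by rewrite hR.
move=> /(_ _ n0) [u [[v huv] hA]].
exists c; split; last exact: nbhs_singleton.
by rewrite -(hu u v huv).
Qed.

Lemma within_at (X Y Z : topologicalType) (A : set Y) (g : Y -> Z) (k : X -> Y) x0 :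
  {within A, continuous g} -> (forall x, A (k x)) -> {for x0, continuous k} ->
  {for x0, continuous (g \o k)}.
Proof.
move=> /subspace_continuousP hg hA hk B nB.
have h1 : within A (nbhs (k x0)) (g @^-1` B) := hg (k x0) (hA x0) B nB.
have h2 : nbhs (k x0) [set y | A y -> B (g y)] := h1.
have h3 : nbhs x0 (k @^-1` [set y | A y -> B (g y)]) := hk _ h2.
by apply: filterS h3 => x /= hx; exact: hx (hA x).
Qed.

Lemma within_comp3 (X Y Z W : topologicalType) (D : set X) (A : set Y) (k : X -> Y)
    (g : Y -> Z) (q : Z -> W) :
  {within A, continuous g} -> (forall x, D x -> A (k x)) -> continuous k ->
  continuous q -> {within D, continuous (q \o g \o k)}.
Proof.
move=> /subspace_continuousP hg hA hk hq; apply/subspace_continuousP => x Dx B nB.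
have nq : nbhs (g (k x)) (q @^-1` B) := hq _ _ nB.
have h1 : within A (nbhs (k x)) (g @^-1` (q @^-1` B)) := hg (k x) (hA x Dx) _ nq.
have h1' : nbhs (k x) [set y | A y -> B (q (g y))] := h1.
have h2 : nbhs x (k @^-1` [set y | A y -> B (q (g y))]) := hk _ _ h1'.
rewrite /= nbhs_simpl /within /=.
by apply: filterS h2 => y /= hy Dy; exact: hy (hA _ Dy).
Qed.

Lemma ptws_cvg (I : eqType) (V : topologicalType) (T : Type) (F : set_system T)
  {FF : Filter F} (g : T -> prod_topology (fun _ : I => V)) (f : prod_topology (fun _ : I => V)) :
  (forall i, (fun t => g t i) @ F --> f i) -> g @ F --> f.
Proof.
move=> h; apply/cvg_sup => i; apply/cvg_image.
- apply/seteqP; split => // v _; exists (@dfwith I (fun _ => V) f i v) => //; by rewrite /= dfwithin.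
- move=> B nB; exists [set phi : prod_topology (fun _ : I => V) | B (phi i)].
    exact: h _ nB.
  apply/seteqP; split => [v [phi hphi <-]|v Bv] //.
  exists (@dfwith I (fun _ => V) f i v); by rewrite /= dfwithin.
Qed.

Section Cont.
Variable R : TopComRing.type.

Lemma scale_cont (M : TopLmod.type R) (e : M) : continuous (fun s : R => s *: e).
Proof.
move=> s.
have hp : {for s, continuous (fun t : R => (t, e))}.
  by apply: cvg_pair; [exact: cvg_id|exact: cvg_cst].
exact: (continuous_comp hp (@toplmod_scale_cont R M (s, e))).
Qed.

Lemma scale_cont2 (M N : TopLmod.type R) (e : (M * N)%type) :
  continuous (fun s : R => s *: e).
Proof.
have -> : (fun s : R => s *: e) = (fun s => (s *: e.1, s *: e.2)).
  by apply: funext => s; case: e.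
move=> s; apply: cvg_pair; exact: scale_cont.
Qed.

Lemma mulr_cont (u : R) : continuous (fun s : R => s * u).
Proof.
move=> s.
have hp : {for s, continuous (fun t : R => (t, u))}.
  by apply: cvg_pair; [exact: cvg_id|exact: cvg_cst].
exact: (continuous_comp hp (@topring_mul_cont R (s, u))).
Qed.
End Cont.

Unset Implicit Arguments.
Section InfBasics.
Variables (R : TopComRing.type) (E0 E1 : TopLmod.type R).

Lemma Emap_tau n M (z : SE E0 E1 n) (I : {set 'I_M}) :
  Emap (@tau R n M) z I = if okn n (nset I) then z (low n I) else 0.
Proof.
rewrite /Emap /tau; case: ifP => hok.
  rewrite (bigD1 (low n I)) //= big1 ?addr0; first by rewrite /gbasis eqxx scale1r.
  by move=> J /negbTE hJ; rewrite /gbasis eq_sym hJ scale0r.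
by rewrite big1 // => J _; rewrite scale0r.
Qed.

Lemma proj_inj n M (z : SE E0 E1 n) :
  proj_fin (N:=M) (inj_fin (N:=n) z) = Emap (@tau R n M) z.
Proof. by apply: funext => I; rewrite Emap_tau. Qed.

Lemma inj_nset n (z : SE E0 E1 n) (I : {set 'I_n}) : inj_fin (N:=n) z (nset I) = z I.
Proof.
rewrite /inj_fin; have ok : okn n (nset I) by apply/allP => j /nset_lt.
rewrite -/(okn n (nset I)) ok; congr (z _); apply: nset_inj.
exact: nset_finset.
Qed.

Lemma proj_inj_id n (z : SE E0 E1 n) : proj_fin (N:=n) (inj_fin (N:=n) z) = z.
Proof. by apply: funext => I; rewrite /proj_fin -/(nset I) inj_nset. Qed.

Lemma inj_tau n M (w : SE E0 E1 n) (J : {fset nat}) :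
  inj_fin (N:=M) (Emap (@tau R n M) w) J = if okn M J then inj_fin (N:=n) w J else 0.
Proof.
rewrite /inj_fin -/(okn M J) -/(okn n J); case: ifP => hM //.
rewrite Emap_tau nset_finset // /low nset_finset //.
Qed.

Lemma inj_lin n (a b : SE E0 E1 n) t :
  inj_fin (N:=n) (SEadd a (SEscale t b)) = SEinf_add (inj_fin (N:=n) a) (SEinf_scale t (inj_fin (N:=n) b)).
Proof.
apply: funext => J; rewrite /inj_fin /SEinf_add /SEinf_scale /SEadd /SEscale.
by case: ifP => _ //; rewrite scaler0 addr0.
Qed.

Lemma okn_mono a b (J : {fset nat}) : (a <= b)%N -> okn a J -> okn b J.
Proof. by move=> hab /allP h; apply/allP => j /h /leq_trans; apply. Qed.

Lemma inj_proj_id N (x : SEinf E0 E1) : supported_below N x -> inj_fin (N:=N) (proj_fin (N:=N) x) = x.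
Proof.
move=> hs; apply: funext => J; rewrite /inj_fin /proj_fin; case: ifP => hok.
  by rewrite -/(nset _) nset_finset.
by apply/esym/eqP; apply: contraFT hok => /eqP /hs.
Qed.

Lemma SEv_inj n (z : SE E0 E1 n) : SEv z -> SEinf_v (inj_fin (N:=n) z).
Proof.
move=> hz; split.
  exists n => J; rewrite /inj_fin; case: ifP => [h _|_ h] //; exfalso; exact: h.
move=> J; rewrite /inj_fin; case hok: (all (fun j => (j < n)%N) J); last by case: ifP.
have := hz (finset (fun i : 'I_n => val i \in J)).
by rewrite -card_nset nset_finset.
Qed.

Lemma SEv_proj N (x : SEinf E0 E1) : SEinf_v x -> SEv (proj_fin (N:=N) x).
Proof.
move=> [_ hx] I; rewrite /proj_fin -/(nset I) -card_nset; exact: hx.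
Qed.

Lemma eval_cont (J : {fset nat}) : continuous (fun x : SEinf E0 E1 => x J).
Proof.
apply/continuousP => O oO; change (dlim_open ((fun x : SEinf E0 E1 => x J) @^-1` O)) => N.
rewrite /preimage /inj_fin /=; case: (all (fun j => (j < N)%N) J) => /=.
  have := @proj_continuous _ (fun _ : {set 'I_N} => (E0 * E1)%type) (finset (fun i : 'I_N => val i \in J)).
  move=> hc; exact: ((@continuousP (prod_topology (fun _ : {set 'I_N} => (E0 * E1)%type)) _ _).1 hc O oO).
have [O0|nO0] := pselect (O 0).
  by rewrite (_ : [set _ | _] = setT); [exact: openT|apply/seteqP; split].
by rewrite (_ : [set _ | _] = set0); [exact: open0|apply/seteqP; split].
Qed.

Lemma inj_cont n : continuous (@inj_fin R E0 E1 n : SE E0 E1 n -> SEinf E0 E1).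
Proof. by apply/continuousP => A oA; exact: oA n. Qed.

Lemma proj_cont n : continuous (@proj_fin R E0 E1 n : SEinf E0 E1 -> SE E0 E1 n).
Proof.
move=> x0; apply: (@ptws_cvg _ _ _ _ (@nbhs_filter (SEinf E0 E1) x0)) => I; exact: (eval_cont (nset I)).
Qed.
End InfBasics.
Arguments SEv_inj {R E0 E1 n z}.
Arguments SEv_proj {R E0 E1 N x}.
Arguments inj_nset {R E0 E1 n}.
Arguments proj_inj {R E0 E1 n M}.
Arguments inj_tau {R E0 E1 n M}.
Arguments tau_even {R n M}.
Arguments inj_lin {R E0 E1 n}.
Arguments inj_proj_id {R E0 E1 N x}.
Arguments eval_cont {R E0 E1}.
Arguments proj_cont {R E0 E1 n}.
Arguments inj_cont {R E0 E1 n}.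
Arguments Emap_tau {R E0 E1 n M}.
Arguments proj_inj_id {R E0 E1 n}.

Unset Implicit Arguments.
Section Part1.
Variables (R : TopComRing.type) (E0 E1 F0 F1 : TopLmod.type R).
Variables (U : forall n : nat, set (SE E0 E1 n))
  (f : forall n : nat, SE E0 E1 n -> SE F0 F1 n).
Hypotheses (hF : hausdorff_space (F0 * F1)%type) (hR : units_dense R)
  (HU : open_subfunctor U) (Hf : nat_trans U f).

Definition wp n (p : 'I_n) (s : R) : {set 'I_n} -> R := fun I => if p \in I then s else 1.
Arguments wp {n} p s _.

Lemma wp_even n (p : 'I_n) s : even_morph (dmorph (wp p s)).
Proof.
apply: dmorph_even; first by rewrite /wp finset.in_set0.
move=> I J hIJ; rewrite /wp finset.in_setU.
case hI: (p \in I); case hJ: (p \in J) => /=; rewrite ?mulr1 ?mul1r //.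
have h : p \in I :&: J by rewrite finset.in_setI hI hJ.
by rewrite hIJ finset.in_set0 in h.
Qed.

Lemma Uchar n (z : SE E0 E1 n) : U n z <-> SEv z /\ U 0 (Emap (@geps R n) z).
Proof. by case: HU => _ _ _ H4; rewrite {1}H4. Qed.

Lemma Uequiv n (z z' : SE E0 E1 n) : U n z -> SEv z' -> z' finset.set0 = z finset.set0 -> U n z'.
Proof.
move=> /Uchar [_ h0] hv he; apply/Uchar; split => //.
have -> : Emap (@geps R n) z' = Emap (@geps R n) z.
  by apply: funext => J; rewrite !Emap_geps he.
exact: h0.
Qed.

Lemma part1 n (g1 : SE E0 E1 n * SE E0 E1 n * R -> SE F0 F1 n) :
  C1_witness (@SEadd R E0 E1 n) (@SEscale R E0 E1 n) (@SEsub R F0 F1 n)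
       (@SEscale R F0 F1 n) (@SEv R E0 E1 n) (U n) (f n) g1 ->
  forall x : SE E0 E1 n, U n x ->
  forall (p : 'I_n) (y : SE E0 E1 n), SEv_theta p y ->
    f n (SEadd x y) = SEadd (f n x) (g1 (x, y, 0)).
Proof.
move=> [Wc Wid] x Ux p y [Yv Yp].
case: HU => HU1 HU2 HU3 HU4; case: Hf => Hf1 Hf2 Hf3.
pose xs s := Emap (dmorph (wp p s)) x.
have xsE s : xs s = (fun I => wp p s I *: x I).
  by apply: funext => I; rewrite /xs Emap_dmorph.
have Uxs s : U n (xs s) by apply: HU3 => //; exact: wp_even.
have y0 : y finset.set0 = 0 by apply: Yp; rewrite finset.in_set0.
have SEvx : SEv x by apply: HU1.
have Uxu u : U n (SEadd x (SEscale u y)).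
  apply: (Uequiv _ _ _ Ux); last by rewrite /SEadd /SEscale y0 scaler0 addr0.
  move=> I; have := SEvx I; have := Yv I.
  by case: ifP => _ /= -> ->; rewrite scaler0 addr0.
have PhE s u : Emap (dmorph (wp p s)) (SEadd x (SEscale u y)) = SEadd (xs s) (SEscale (s * u) y).
  apply: funext => I; rewrite Emap_dmorph xsE /SEadd /SEscale /wp.
  case: ifP => hp; first by rewrite scalerDr scalerA.
  by rewrite Yp ?hp // !scaler0 !addr0.
have dom s u : C1_dom (@SEadd R E0 E1 n) (@SEscale R E0 E1 n) (@SEv R E0 E1 n) (U n)
    (xs s, y, s * u).
  split => //=; split => //; rewrite -PhE; apply: HU3 => //; exact: wp_even.
pose D u I := f n (SEadd x (SEscale u y)) I - f n x I.
have key s u I : wp p s I *: D u I = (s * u) *: g1 (xs s, y, s * u) I.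
  have := Wid _ (dom s u) => /= /(congr1 (fun h => h I)).
  rewrite /SEsub /SEscale -PhE Hf3 //; last exact: wp_even.
  rewrite /xs Hf3 //; last exact: wp_even.
  by rewrite !Emap_dmorph -scalerBr.
have key2 s u I : s *: D u I = (s * u) *: g1 (xs s, y, s * u) I.
  have := key s u I; rewrite /wp; case: ifP => // hp.
  have := key 0 u I; rewrite /wp hp mul0r scale0r scale1r => ->.
  by move=> <-; rewrite scaler0.
have xscont : continuous xs.
  have -> : xs = (fun s => (fun I => wp p s I *: x I) : SE E0 E1 n).
    by apply: funext => s; exact: xsE.
  move=> s0; apply: ptws_cvg => I; rewrite /wp; case: ifP => _.
    exact: scale_cont2.
  exact: cvg_cst.
have hcont (k : R -> SE E0 E1 n * SE E0 E1 n * R) (I : {set 'I_n}) :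
    (forall s, C1_dom (@SEadd R E0 E1 n) (@SEscale R E0 E1 n) (@SEv R E0 E1 n) (U n) (k s)) ->
    {for 0, continuous k} -> {for 0, continuous (fun s => g1 (k s) I)}.
  move=> hk ck.
  apply: (continuous_comp (f := g1 \o k) (g := fun h => h I)).
    exact: (within_at Wc hk ck).
  exact: proj_continuous.
pose C I := g1 (xs 0, y, 0) I.
have L1 u w : u * w = 1 -> forall I, w *: D u I = C I.
  move=> huw I; symmetry.
  have := @units_limit R _ (fun s => g1 (xs s, y, s * u) I) (w *: D u I) hF hR.
  rewrite /= mul0r; apply.
    apply: hcont => [s|]; first exact: dom.
    rewrite /prop_for /continuous_at /=.
    apply: (@cvg_pair _ _ _ _ (nbhs (xs 0, y)) (nbhs (0 * u)) _ _ _ (fun s => (xs s, y)) (fun s => s * u)); last exact: mulr_cont.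
    apply: (@cvg_pair _ _ _ _ (nbhs (xs 0)) (nbhs y) _ _ _ xs (fun _ => y)); last exact: cvg_cst.
    exact: (xscont 0).
  move=> s v hsv.
  have e : (v * w) * (s * u) = 1.
    by rewrite mulrACA [v * s]mulrC hsv [w * u]mulrC huw mulr1.
  rewrite -[LHS]scale1r -e -scalerA -key2 scalerA.
  by congr (_ *: _); rewrite mulrAC [v * s]mulrC hsv mul1r.
have L2 I : g1 (x, y, 0) I = C I.
  apply: (@units_limit R _ (fun u => g1 (x, y, u) I) (C I) hF hR).
    apply: hcont => [u|]; first by split => //=; split => //; exact: Uxu.
    rewrite /prop_for /continuous_at /=.
    apply: (@cvg_pair _ _ _ _ (nbhs (x, y)) (nbhs (0:R)) _ _ _ (fun _ => (x, y)) (fun s => s)); last exact: cvg_id.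
    exact: cvg_cst.
  move=> u w huw.
  have x1 : xs 1 = x.
    by rewrite xsE; apply: funext => J; rewrite /wp; case: ifP => _; rewrite scale1r.
  have := key2 1 u I; rewrite scale1r !mul1r x1 => hD.
  by rewrite -(L1 u w huw) hD scalerA [w * u]mulrC huw scale1r.
apply: funext => I.
have := L1 1 1 (mulr1 1) I; rewrite scale1r -L2 /D.
have -> : SEadd x (SEscale 1 y) = SEadd x y.
  by apply: funext => J; rewrite /SEadd /SEscale scale1r.
by rewrite /SEadd => <-; rewrite addrC subrK.
Qed.

Definition wc n M : {set 'I_n} -> R := fun I => if okn M (nset I) then 1 else 0.
Arguments wc : clear implicits.

Lemma okn_U n M (I J : {set 'I_n}) : okn M (nset (I :|: J)) = okn M (nset I) && okn M (nset J).
Proof.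
rewrite nsetU; apply/allP/andP => [h|[/allP h1 /allP h2] j].
  by split; apply/allP => j hj; apply: h; rewrite in_fsetU hj ?orbT.
by rewrite in_fsetU => /orP[/h1|/h2].
Qed.

Lemma wc_even n M : even_morph (dmorph (wc n M)).
Proof.
apply: dmorph_even; first by rewrite /wc nset0 okn0.
move=> I J _; rewrite /wc okn_U.
by case: (okn M (nset I)); case: (okn M (nset J)); rewrite ?mulr1 ?mul0r ?mulr0.
Qed.

Lemma f_inj n (z : SE E0 E1 n) : U n z -> f_inf f (inj_fin (N:=n) z) = inj_fin (N:=n) (f n z).
Proof.
move=> Uz; case: HU => HU1 HU2 HU3 HU4; case: Hf => Hf1 Hf2 Hf3.
rewrite /f_inf; set M := bound_of _.
have [hex _] := SEv_inj (HU1 n z Uz).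
have hsM : supported_below M (inj_fin (N:=n) z) := xgetPex 0%N hex.
rewrite proj_inj Hf3 //; last exact: tau_even.
apply: funext => J; rewrite inj_tau; case: ifP => hJ //.
rewrite /inj_fin -/(okn n J); case: ifP => hn //.
have nK : nset (finset (fun i : 'I_n => val i \in J)) = J := nset_finset hn.
have zs : forall I, ~~ okn M (nset I) -> z I = 0.
  move=> I hI; apply/eqP; apply: contraR hI => hzI; apply: (hsM (nset I)).
  by rewrite inj_nset; exact/eqP.
have zc : Emap (dmorph (wc n M)) z = z.
  apply: funext => I; rewrite Emap_dmorph /wc; case: ifP => h; first by rewrite scale1r.
  by rewrite scale0r zs ?h.
have e := Hf3 n n (dmorph (wc n M)) (wc_even n M) z Uz.
rewrite zc in e.
by rewrite {1}e Emap_dmorph /wc nK hJ scale0r.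
Qed.

Lemma Uinf_inj n (z : SE E0 E1 n) : U n z -> U_inf U (inj_fin (N:=n) z).
Proof.
move=> Uz; have [hv h0] := (Uchar n z).1 Uz; split; first exact: SEv_inj.
have -> : eps_inf (inj_fin (N:=n) z) = Emap (@geps R n) z.
  by apply: funext => J; rewrite /eps_inf Emap_geps -(@nset0 n) inj_nset.
exact: h0.
Qed.

Lemma Uproj N (x : SEinf E0 E1) : U_inf U x -> U N (proj_fin (N:=N) x).
Proof.
case=> hv h0; apply/(Uchar N); split; first exact: SEv_proj.
have -> : Emap (@geps R N) (proj_fin (N:=N) x) = eps_inf x.
  by apply: funext => J; rewrite Emap_geps /proj_fin /eps_inf -/(nset _) nset0.
exact: h0.
Qed.

Lemma U_add_theta n (x : SE E0 E1 n) (p : 'I_n) (y : SE E0 E1 n) t :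
  U n x -> SEv_theta p y -> U n (SEadd x (SEscale t y)).
Proof.
move=> Ux [Yv Yp]; case: HU => HU1 _ _ _.
have y0 : y finset.set0 = 0 by apply: Yp; rewrite finset.in_set0.
apply: (Uequiv _ _ _ Ux); last by rewrite /SEadd /SEscale y0 scaler0 addr0.
move=> I; have := HU1 n x Ux I; have := Yv I.
by case: ifP => _ /= -> ->; rewrite scaler0 addr0.
Qed.

Lemma witness_fin (g1i : SEinf E0 E1 * SEinf E0 E1 * R -> SEinf F0 F1) :
  C1_witness (@SEinf_add R E0 E1) (@SEinf_scale R E0 E1) (@SEinf_sub R F0 F1)
        (@SEinf_scale R F0 F1) (@SEinf_v R E0 E1) (U_inf U) (f_inf f) g1i ->
  forall n, C1_witness (@SEadd R E0 E1 n) (@SEscale R E0 E1 n) (@SEsub R F0 F1 n)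
        (@SEscale R F0 F1 n) (@SEv R E0 E1 n) (U n) (f n)
    (fun z => proj_fin (N:=n) (g1i (inj_fin (N:=n) z.1.1, inj_fin (N:=n) z.1.2, z.2))).
Proof.
move=> [Wc Wid] n; case: HU => HU1 _ _ _; split.
- pose k := fun z : SE E0 E1 n * SE E0 E1 n * R =>
    ((inj_fin (N:=n) z.1.1 : SEinf E0 E1), (inj_fin (N:=n) z.1.2 : SEinf E0 E1), z.2).
  apply: (within_comp3 (k := k) (g := g1i)
    (q := (@proj_fin R F0 F1 n : SEinf F0 F1 -> SE F0 F1 n)) Wc); last exact: proj_cont.
  + move=> [[a b] t] [/= ha [hb hab]]; split => /=; first exact: Uinf_inj.
    split; first exact: SEv_inj.
    rewrite -inj_lin; exact: Uinf_inj.
  + move=> z0; rewrite /k /prop_for /continuous_at /=.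
    apply: (@cvg_pair _ _ _ _ (nbhs ((inj_fin (N:=n) z0.1.1 : SEinf E0 E1), (inj_fin (N:=n) z0.1.2 : SEinf E0 E1))) (nbhs z0.2) _ _ _
      (fun z => ((inj_fin (N:=n) z.1.1 : SEinf E0 E1), (inj_fin (N:=n) z.1.2 : SEinf E0 E1))) (fun z => z.2)); last exact: cvg_snd.
    apply: (@cvg_pair _ _ _ _ (nbhs (inj_fin (N:=n) z0.1.1 : SEinf E0 E1)) (nbhs (inj_fin (N:=n) z0.1.2 : SEinf E0 E1)) _ _ _
      (fun z => (inj_fin (N:=n) z.1.1 : SEinf E0 E1)) (fun z => (inj_fin (N:=n) z.1.2 : SEinf E0 E1))).
    * apply: (continuous_comp (f := fun z : SE E0 E1 n * SE E0 E1 n * R => z.1.1)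
        (g := (inj_fin (N:=n) : SE E0 E1 n -> SEinf E0 E1))); last exact: inj_cont.
      apply: (continuous_comp (f := fst) (g := fst)); exact: cvg_fst.
    * apply: (continuous_comp (f := fun z : SE E0 E1 n * SE E0 E1 n * R => z.1.2)
        (g := (inj_fin (N:=n) : SE E0 E1 n -> SEinf E0 E1))); last exact: inj_cont.
      apply: (continuous_comp (f := fst) (g := snd)); [exact: cvg_fst|exact: cvg_snd].
- move=> [[a b] t] [/= ha [hb hab]].
  have dz : C1_dom (@SEinf_add R E0 E1) (@SEinf_scale R E0 E1) (@SEinf_v R E0 E1) (U_inf U)
      (inj_fin (N:=n) a, inj_fin (N:=n) b, t).
    split => /=; first exact: Uinf_inj.
    split; first exact: SEv_inj.
    rewrite -inj_lin; exact: Uinf_inj.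
  have := Wid _ dz => /=; rewrite -inj_lin !f_inj // => e.
  apply: funext => I; have := congr1 (fun h => h (nset I)) e.
  by rewrite /SEinf_sub /SEinf_scale /SEsub /SEscale /proj_fin -/(nset I) !inj_nset.
Qed.

Lemma supp_mono a b (x : SEinf E0 E1) : supported_below a x -> (a <= b)%N -> supported_below b x.
Proof. by move=> h hab J hJ; exact: (okn_mono a b J hab (h J hJ)). Qed.

Lemma part2b (g1i : SEinf E0 E1 * SEinf E0 E1 * R -> SEinf F0 F1) :
  C1_witness (@SEinf_add R E0 E1) (@SEinf_scale R E0 E1) (@SEinf_sub R F0 F1)
        (@SEinf_scale R F0 F1) (@SEinf_v R E0 E1) (U_inf U) (f_inf f) g1i ->
  forall x : SEinf E0 E1, U_inf U x ->
  forall (p : nat) (y : SEinf E0 E1), SEinf_theta p y ->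
    f_inf f (SEinf_add x y) = SEinf_add (f_inf f x) (g1i (x, y, 0)).
Proof.
move=> W x Ux p y Yy.
have Uxfull := Ux.
case: Ux => [[[Nx hNx] xpar] U0x].
case: Yy => [[[Ny hNy] ypar] Yp].
pose N := maxn (maxn Nx Ny) p.+1.
have hx : supported_below N x.
  by apply: (supp_mono Nx) => //; rewrite /N !leq_max leqnn.
have hy : supported_below N y.
  by apply: (supp_mono Ny) => //; rewrite /N !leq_max leqnn orbT.
have hpN : (p < N)%N by rewrite /N leq_max leqnn orbT.
pose x' := proj_fin (N:=N) x; pose y' := proj_fin (N:=N) y.
have ex : inj_fin (N:=N) x' = x := inj_proj_id hx.
have ey : inj_fin (N:=N) y' = y := inj_proj_id hy.
have Ux' : U N x' := Uproj N x Uxfull.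
pose p' : 'I_N := Ordinal hpN.
have Yy' : SEv_theta p' y'.
  split; first exact: (SEv_proj (conj (ex_intro _ Ny hNy) ypar)).
  move=> I hI; rewrite /y' /proj_fin -/(nset I); apply: Yp.
  by rewrite -[p]/(val p') mem_nset.
have Uxy t : U N (SEadd x' (SEscale t y')) := U_add_theta N x' p' y' t Ux' Yy'.
have exy t : SEinf_add x (SEinf_scale t y) = inj_fin (N:=N) (SEadd x' (SEscale t y')).
  by rewrite inj_lin ex ey.
have W' := witness_fin g1i W N.
have e1 := part1 N _ W' x' Ux' p' y' Yy'.
case: W => Wc Wid.
have dom t : C1_dom (@SEinf_add R E0 E1) (@SEinf_scale R E0 E1) (@SEinf_v R E0 E1) (U_inf U)
    (x, y, t).
  split => //=; split; first by split => //; exists Ny.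
  rewrite exy; exact: Uinf_inj.
have supG : supported_below N (g1i (x, y, 0)).
  move=> J hJ; case hnot: (all _ J) => //; exfalso; apply: hJ.
  apply: (@units_limit R _ (fun t => g1i (x, y, t) J) 0 hF hR).
    apply: (continuous_comp (f := g1i \o (fun t => (x, y, t))) (g := fun h => h J)).
      apply: (within_at Wc dom).
      rewrite /prop_for /continuous_at /=.
      apply: (@cvg_pair _ _ _ _ (nbhs (x, y)) (nbhs (0:R)) _ _ _ (fun _ => (x, y)) (fun s => s)); last exact: cvg_id.
      exact: cvg_cst.
    exact: eval_cont.
  move=> t v htv.
  have := Wid _ (dom t) => /= /(congr1 (fun h => h J)).
  rewrite exy f_inj // -{1}ex f_inj // /SEinf_sub /SEinf_scale.
  rewrite /inj_fin hnot subr0 => /esym h0.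
  by rewrite -[LHS]scale1r -htv mulrC -scalerA h0 scaler0.
have e2 := congr1 (inj_fin (N:=N)) e1.
have -> : SEinf_add x y = inj_fin (N:=N) (SEadd x' y').
  rewrite -(scale1r y') -[y in SEinf_add x y](scale1r y).
  have -> : (1 *: y' : SE E0 E1 N) = SEscale 1 y' by [].
  by rewrite -exy.
have exy1 : SEadd x' (SEscale 1 y') = SEadd x' y'.
  by apply: funext => J; rewrite /SEadd /SEscale scale1r.
rewrite f_inj; last by rewrite -exy1; exact: Uxy.
rewrite e1 /= ex ey.
apply: funext => J; rewrite /SEinf_add.
have -> : forall (a b : SE F0 F1 N), inj_fin (N:=N) (SEadd a b) J = inj_fin (N:=N) a J + inj_fin (N:=N) b J.
  by move=> a b; rewrite /inj_fin /SEadd; case: ifP; rewrite ?addr0.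
by rewrite (inj_proj_id supG) -f_inj // ex.
Qed.
End Part1.

Theorem proposition2p16 (R : TopComRing.type) (E0 E1 F0 F1 : TopLmod.type R)
  (U : forall n : nat, set (SE E0 E1 n))
  (f : forall n : nat, SE E0 E1 n -> SE F0 F1 n) :
  hausdorff_space R -> units_dense R ->
  hausdorff_space (E0 * E1)%type -> hausdorff_space (F0 * F1)%type ->
  open_subfunctor U -> nat_trans U f ->
  (* finite Grassmann algebras: each f_lambda is C^1 *)
  ((forall n : nat,
      C1 (@SEadd R E0 E1 n) (@SEscale R E0 E1 n) (@SEsub R F0 F1 n)
         (@SEscale R F0 F1 n) (@SEv R E0 E1 n) (U n) (f n)) ->
   forall (n : nat) (g1 : SE E0 E1 n * SE E0 E1 n * R -> SE F0 F1 n),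
     C1_witness (@SEadd R E0 E1 n) (@SEscale R E0 E1 n) (@SEsub R F0 F1 n)
       (@SEscale R F0 F1 n) (@SEv R E0 E1 n) (U n) (f n) g1 ->
     forall x : SE E0 E1 n, U n x ->
     forall (p : 'I_n) (y : SE E0 E1 n), SEv_theta p y ->
       f n (SEadd x y) = SEadd (f n x) (g1 (x, y, 0)))
  /\
  (* locally k_omega case: only f_infinity is assumed C^1 *)
  (locally_komega R -> locally_komega (E0 * E1)%type ->
   locally_komega (F0 * F1)%type ->
   C1 (@SEinf_add R E0 E1) (@SEinf_scale R E0 E1) (@SEinf_sub R F0 F1)
      (@SEinf_scale R F0 F1) (@SEinf_v R E0 E1) (U_inf U) (f_inf f) ->
   (forall n : nat,
      C1 (@SEadd R E0 E1 n) (@SEscale R E0 E1 n) (@SEsub R F0 F1 n)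
         (@SEscale R F0 F1 n) (@SEv R E0 E1 n) (U n) (f n) /\
      forall g1 : SE E0 E1 n * SE E0 E1 n * R -> SE F0 F1 n,
      C1_witness (@SEadd R E0 E1 n) (@SEscale R E0 E1 n) (@SEsub R F0 F1 n)
        (@SEscale R F0 F1 n) (@SEv R E0 E1 n) (U n) (f n) g1 ->
      forall x : SE E0 E1 n, U n x ->
      forall (p : 'I_n) (y : SE E0 E1 n), SEv_theta p y ->
        f n (SEadd x y) = SEadd (f n x) (g1 (x, y, 0)))
   /\
   (forall g1 : SEinf E0 E1 * SEinf E0 E1 * R -> SEinf F0 F1,
      C1_witness (@SEinf_add R E0 E1) (@SEinf_scale R E0 E1) (@SEinf_sub R F0 F1)
        (@SEinf_scale R F0 F1) (@SEinf_v R E0 E1) (U_inf U) (f_inf f) g1 ->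
      forall x : SEinf E0 E1, U_inf U x ->
      forall (p : nat) (y : SEinf E0 E1), SEinf_theta p y ->
        f_inf f (SEinf_add x y) = SEinf_add (f_inf f x) (g1 (x, y, 0)))).
Proof.
move=> _ hR hE hF HU Hf; split.
  move=> _ n g1 W x Ux p y Yy.
  exact: (part1 R E0 E1 F0 F1 U f hF hR HU Hf n g1 W x Ux p y Yy).
move=> _ _ _ [_ [g1i W]]; split.
  move=> n; split.
    split; first by case: Hf.
    by eexists; exact: (witness_fin R E0 E1 F0 F1 U f HU Hf g1i W n).
  move=> g1 W1 x Ux p y Yy.
  exact: (part1 R E0 E1 F0 F1 U f hF hR HU Hf n g1 W1 x Ux p y Yy).
move=> g1 W1 x Ux p y Yy.
exact: (part2b R E0 E1 F0 F1 U f hF hR HU Hf g1 W1 x Ux p y Yy).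
Qed.
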